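(* If $(n,x,y)\in\mathbb Z^3$ satisfies $n\ge 3$, $\max\{|x|,|y|\}\ge 2$ and $\Phi_n(x,y)<7^{\varphi(n)/2}$, then $\max\{|x|,|y|\}=2$.
   Context: For $n\ge 1$, $\phi_n(X)\in\mathbb Z[X]$ denotes the $n$-th cyclotomic polynomial (degree $\varphi(n)$, $\varphi$ Euler's totient function), and the cyclotomic binary form is $\Phi_n(X,Y)=Y^{\varphi(n)}\phi_n(X/Y)$. *)

(* Defs.v *)
From HB Require Import structures.
From mathcomp Require Import all_boot all_order all_algebra all_field.
Set Implicit Arguments. Unset Strict Implicit. Unset Printing Implicit Defensive.
Import Order.TTheory GRing.Theory Num.Theory.
Local Open Scope ring_scope.

(* Cyclotomic binary form Phi_n(X,Y) = Y^{phi(n)} phi_n(X/Y), evaluated at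
   integers x, y: the homogenization sum_i c_i x^i y^(phi(n) - i), where
   'Phi_n = sum_i c_i X^i (size 'Phi_n = totient n + 1). *)
Definition cycloBinForm (n : nat) (x y : int) : int :=
  \sum_(i < size 'Phi_n) ('Phi_n)`_i * x ^+ i * y ^+ (totient n - i).

(* Main.v *)
Require Import Defs.
From HB Require Import structures.
From mathcomp Require Import all_boot all_order all_algebra all_field.
From mathcomp Require Import zify ring.
Import Order.TTheory GRing.Theory Num.Theory.
Local Open Scope ring_scope.

Lemma key (F : numFieldType) (I : finType) (A : {pred I}) (c : I -> F) (a b : F) :
  0 <= a -> 0 <= b -> {in A, forall i, 0 <= c i} -> 1 <= \prod_(i in A) c i ->
  (a + b) ^+ #|A| <= \prod_(i in A) (a + b * c i).
Proof.
move=> a0 b0 c0 c1.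
have [N0|Npos] := posnP #|A|.
  by rewrite N0 expr0 (big_pred0 _ _ _ _ (card0_eq N0)).
have cpos : {in A, forall i, 0 < c i}.
  move=> i Ai; rewrite lt0r c0 // andbT; apply/eqP => ci0.
  by move: c1; rewrite (bigD1 i) //= ci0 mul0r ler10.
have [->|bpos] := eqVneq b 0.
  by under eq_bigr do rewrite mul0r addr0; rewrite addr0 prodr_const.
have {bpos} bpos : 0 < b by rewrite lt0r bpos.
have [->|apos] := eqVneq a 0.
  under eq_bigr do rewrite add0r; rewrite add0r big_split /= prodr_const.
  by rewrite ler_peMr ?exprn_ge0.
have {apos} apos : 0 < a by rewrite lt0r apos.
set N := #|A| in Npos *.
pose d i := a + b * c i.
have dpos : {in A, forall i, 0 < d i}.
  by move=> i Ai; rewrite /d ltr_wpDr // mulr_ge0 ?ltW ?cpos.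
pose P := \prod_(i in A) d i.
have Ppos : 0 < P by apply: prodr_gt0.
rewrite real_leNgt; last 2 first.
- by rewrite ger0_real // exprn_ge0 // addr_ge0.
- by rewrite ger0_real // ltW.
apply/negP => HP.
pose al := (\sum_(i in A) (a / d i)) / N%:R.
pose be := (\sum_(i in A) (b * c i / d i)) / N%:R.
have Nnz : N%:R != 0 :> F by rewrite pnatr_eq0 -lt0n.
have albe : al + be = 1.
  rewrite /al /be -mulrDl -big_split /=.
  rewrite (eq_bigr (fun _ => 1)) ?sumr_const ?divff //.
  by move=> i Ai; rewrite -mulrDl divff // gt_eqF ?dpos.
have al0 : 0 <= al.
  by rewrite divr_ge0 // sumr_ge0 // => i Ai; rewrite divr_ge0 ?ltW ?dpos.
have be0 : 0 <= be.
  by rewrite divr_ge0 // sumr_ge0 // => i Ai; rewrite divr_ge0 ?mulr_ge0 ?ltW ?dpos ?cpos.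
have ab0 : 0 < a + b by rewrite addr_gt0.
have AG1 : \prod_(i in A) (a / d i) <= al ^+ N.
  apply: (@leif_AGM F I A (fun i => a / d i) _).1.
  by move=> i Ai; rewrite divr_ge0 ?ltW ?dpos.
have AG2 : \prod_(i in A) (b * c i / d i) <= be ^+ N.
  apply: (@leif_AGM F I A (fun i => b * c i / d i) _).1.
  by move=> i Ai; rewrite divr_ge0 ?mulr_ge0 ?ltW ?dpos ?cpos.
have H1 : a / (a + b) < al.
  rewrite -(ltr_pXn2r Npos); last 2 first.
  - by rewrite nnegrE divr_ge0 ?ltW.
  - by rewrite nnegrE.
  apply: lt_le_trans AG1.
  rewrite big_split /= prodr_const prodfV -/P expr_div_n.
  by rewrite ltr_pM2l ?exprn_gt0 // ltf_pV2 ?posrE ?exprn_gt0.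
have H2 : b / (a + b) < be.
  rewrite -(ltr_pXn2r Npos); last 2 first.
  - by rewrite nnegrE divr_ge0 ?ltW.
  - by rewrite nnegrE.
  apply: lt_le_trans AG2.
  rewrite big_split big_split /= !prodr_const prodfV -/P expr_div_n.
  rewrite mulrAC; apply: lt_le_trans (_ : b ^+ N / P <= _).
    by rewrite ltr_pM2l ?exprn_gt0 // ltf_pV2 ?posrE ?exprn_gt0.
  by rewrite -/N ler_peMr // divr_ge0 ?exprn_ge0 ?ltW.
have := ltrD H1 H2.
by rewrite -mulrDl divff ?gt_eqF // albe ltxx.
Qed.

Lemma coprime_subl n k : (k <= n)%N -> coprime (n - k) n = coprime k n.
Proof.
move=> kn; rewrite /coprime.
have -> : gcdn (n - k) n = gcdn (n - k) k.
  by rewrite -{2}(subnK kn) gcdnDl.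
by rewrite gcdnC -{2}(subnK kn) gcdnDr.
Qed.

Lemma pairing (R : Type) (idx : R) (op : Monoid.com_law idx) n (F : nat -> R) :
  (2 < n)%N ->
  \big[op/idx]_(0 <= k < n | coprime k n) F k =
  \big[op/idx]_(0 <= k < n | coprime k n && (k.*2 < n)%N) op (F k) (F (n - k)%N).
Proof.
move=> n2.
rewrite (bigID (fun k => (k.*2 < n)%N)) /= big_split /=; congr (op _ _).
have n0 : (0 < n)%N by apply: leq_trans n2.
have cop0 : coprime 0 n = false by rewrite /coprime gcd0n; case: n n2 {n0} => // [[]].
rewrite big_ltn_cond // cop0 /= [RHS]big_ltn_cond // cop0 /=.
rewrite big_nat_rev /=.
have key : forall j, (1 <= j < n)%N -> coprime j n ->
    ~~ ((n - j).*2 < n)%N = (j.*2 < n)%N.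
  move=> j /andP[j1 jlt] cop.
  have ne : j.*2 != n.
    apply/negP => /eqP e; move: cop; rewrite -e /coprime -muln2 gcdnMr.
    by move=> /eqP j1'; move: n2; rewrite -e j1'.
  move: ne jlt j1; rewrite -!muln2 => ne jlt j1.
  by apply/idP/idP => H; lia.
rewrite [LHS]big_nat_cond [RHS]big_nat_cond.
apply: eq_big => i; last first.
  by move=> /andP[/andP[i1 ilt] _]; by rewrite addnC addn1 subSS.
apply: andb_id2l => ir.
have [i1 ilt] := andP ir.
have -> : (1 + n - i.+1 = n - i)%N by rewrite addnC addn1 subSS.
rewrite coprime_subl; last exact: ltnW.
apply: andb_id2l => cop.
exact: key.
Qed.

Lemma fac_q (R : comNzRingType) (x y u v : R) : u * v = 1 ->
  (x - u * y) * (x - v * y) = (x - y) ^+ 2 + x * y * ((1 - u) * (1 - v)).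
Proof.
move=> uv; apply/eqP; rewrite -subr_eq0.
have -> : (x - u * y) * (x - v * y) - ((x - y) ^+ 2 + x * y * ((1 - u) * (1 - v)))
  = (u * v - 1) * (y ^+ 2 - x * y) by ring.
by rewrite uv subrr mul0r.
Qed.

Lemma fac_p (R : comNzRingType) (x y u v : R) : u * v = 1 ->
  (x - u * y) * (x - v * y) = (x + y) ^+ 2 + (- (x * y)) * ((1 + u) * (1 + v)).
Proof.
move=> uv; apply/eqP; rewrite -subr_eq0.
have -> : (x - u * y) * (x - v * y) - ((x + y) ^+ 2 + (- (x * y)) * ((1 + u) * (1 + v)))
  = (u * v - 1) * (y ^+ 2 + x * y) by ring.
by rewrite uv subrr mul0r.
Qed.

Section Alg.
Variables (n : nat) (z : algC).
Hypotheses (n3 : (2 < n)%N) (zp : n.-primitive_root z).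

Definition P1 k := coprime k n && (k.*2 < n)%N.
Definition A1 := [pred k : 'I_n | P1 k].

Lemma Phi_eval (w : algC) :
  (map_poly intr 'Phi_n).[w] =
  \prod_(k in A1) ((w - z ^+ k) * (w - z ^+ (n - k))).
Proof.
rewrite (Cintr_Cyclotomic zp) /cyclotomic horner_prod.
under eq_bigr do rewrite hornerXsubC.
rewrite -(big_mkord (fun k => coprime k n) (fun k => w - z ^+ k)).
rewrite pairing // big_mkord.
by apply: eq_bigl.
Qed.

Lemma tot_A1 : totient n = (2 * #|A1|)%N.
Proof.
have := @pairing nat 0%N addn n (fun _ => 1%N) n3.
rewrite big_mkord [in RHS]big_mkord -sum1_card => E.
rewrite totient_count_coprime big_mkord.
transitivity (\sum_(i < n | coprime i n) 1)%N.
  by rewrite [RHS]big_mkcond; apply: eq_bigr => i _; rewrite coprime_sym; case: coprime.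
rewrite E (eq_bigl [in A1]) // sum_nat_const.
by rewrite (eq_bigl [in A1]) // sum_nat_const mulnC muln1.
Qed.

Lemma n0 : (0 < n)%N. Proof. exact: prim_order_gt0 zp. Qed.

Lemma z_norm k : `|z ^+ k| = 1.
Proof.
have h : `|z| ^+ n = 1 by rewrite -normrX prim_expr_order // normr1.
rewrite normrX.
have -> : `|z| = 1.
  apply: (pexpIrn n0); rewrite ?nnegrE ?normr_ge0 ?ler01 //=.
  by rewrite h expr1n.
by rewrite expr1n.
Qed.

Lemma zinv k : (k <= n)%N -> z ^+ k * z ^+ (n - k) = 1.
Proof. by move=> kn; rewrite -exprD subnKC // prim_expr_order. Qed.

Lemma zconj k : (k <= n)%N -> (z ^+ k)^* = z ^+ (n - k).
Proof.
move=> kn.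
have nz : z ^+ k != 0 by rewrite -normr_eq0 z_norm oner_eq0.
have -> : (z ^+ k)^* = (z ^+ k)^-1 by rewrite invC_norm z_norm expr1n invr1 mul1r.
by rewrite -[RHS]mul1r -(mulVf nz) -mulrA zinv // mulr1.
Qed.

Lemma A1_pos (k : 'I_n) : k \in A1 -> (0 < k)%N && (k.*2 < n)%N.
Proof.
rewrite inE /P1 => /andP[cop ->]; rewrite andbT lt0n.
apply/negP => /eqP k0; move: cop; rewrite k0 /coprime gcd0n => /eqP n1.
by move: n3; rewrite n1.
Qed.

Lemma zk_neq1 k : (0 < k < n)%N -> z ^+ k != 1.
Proof.
move=> /andP[k0 kn]; rewrite -(expr0 z) (eq_prim_root_expr zp) mod0n modn_small //.
by rewrite -lt0n.
Qed.

Lemma zk_neqN1 k : (0 < k)%N -> (k.*2 < n)%N -> z ^+ k != -1.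
Proof.
move=> k0 k2; apply/negP => /eqP e.
have e2 : z ^+ (k.*2) == 1 by rewrite -addnn exprD e mulN1r opprK.
have h : (0 < k.*2 < n)%N.
  by rewrite k2 andbT -addnn; apply: leq_trans (leq_addr _ _).
by rewrite (negbTE (zk_neq1 _ h)) in e2.
Qed.

Lemma q_ge0 k : (k <= n)%N -> 0 <= (1 - z ^+ k) * (1 - z ^+ (n - k)).
Proof.
move=> kn; rewrite -zconj //.
have <- : (1 - z ^+ k)^* = 1 - (z ^+ k)^* by rewrite rmorphB /= rmorph1.
by rewrite -normCK exprn_ge0.
Qed.

Lemma p_ge0 k : (k <= n)%N -> 0 <= (1 + z ^+ k) * (1 + z ^+ (n - k)).
Proof.
move=> kn; rewrite -zconj //.
have <- : (1 + z ^+ k)^* = 1 + (z ^+ k)^* by rewrite rmorphD /= rmorph1.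
by rewrite -normCK exprn_ge0.
Qed.


Lemma hom (x y : int) :
  (cycloBinForm n x y)%:~R =
  \prod_(k in A1) ((x%:~R - z ^+ k * y%:~R) * (x%:~R - z ^+ (n - k) * y%:~R)) :> algC.
Proof.
set X : algC := x%:~R; set Y : algC := y%:~R.
have tot := tot_A1.
rewrite /cycloBinForm rmorph_sum /=.
under eq_bigr do rewrite !rmorphM !rmorphXn /=.
rewrite -/X -/Y.
have [Y0|Y0] := eqVneq Y 0.
  rewrite Y0; under [RHS]eq_bigr do rewrite !mulr0 !subr0.
  rewrite prodr_const -expr2 -exprM -tot.
  have lc : ('Phi_n)`_(totient n) = 1.
    by rewrite -(monicP (Cyclotomic_monic n)) lead_coefE size_Cyclotomic.
  move: ('Phi_n) lc (size_Cyclotomic n) => p lc ->.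
  rewrite big_ord_recr /= big1 ?add0r.
    by rewrite lc subnn expr0 mulr1 mul1r.
  move=> i _; rewrite expr0n subn_eq0 leqNgt ltn_ord /= mulr0 //.
transitivity (Y ^+ totient n * (map_poly intr 'Phi_n).[X / Y]).
  rewrite horner_coef size_map_inj_poly; last 2 first.
  - exact: intr_inj.
  - by rewrite rmorph0.
  rewrite mulr_sumr; apply: eq_bigr => i _.
  have := ltn_ord i; rewrite [X in (_ < X)%N]size_Cyclotomic ltnS => ilt.
  rewrite coef_map /= expr_div_n exprB ?unitfE ?expf_neq0 //.
  by field; rewrite expf_neq0.
rewrite Phi_eval tot exprM -prodr_const -big_split /=.
by apply: eq_bigr => k _; field.
Qed.


Lemma prod_ge1 (m : int) (f : 'I_n -> algC) :
  m%:~R = \prod_(k in A1) f k -> (forall k, k \in A1 -> 0 <= f k) ->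
  (forall k, k \in A1 -> f k != 0) -> 1 <= \prod_(k in A1) f k.
Proof.
move=> em f0 fn0; rewrite -em ler1z.
have : 0 <= m by rewrite -(ler0z algC) em prodr_ge0.
have : m != 0 by rewrite -(intr_eq0 algC) em; apply/prodf_neq0.
lia.
Qed.

Lemma bound_q (x y : int) : 0 <= x * y ->
  ((x ^+ 2 - x * y + y ^+ 2)%:~R : algC) ^+ #|A1| <= (cycloBinForm n x y)%:~R.
Proof.
move=> xy0; set X : algC := x%:~R; set Y : algC := y%:~R.
rewrite hom -/X -/Y.
under eq_bigr => k kA do rewrite (@fac_q _ _ _ _ _ (zinv _ (ltnW (ltn_ord k)))).
have -> : ((x ^+ 2 - x * y + y ^+ 2)%:~R : algC) = (X - Y) ^+ 2 + X * Y.
  by rewrite /X /Y !(rmorphD, rmorphB, rmorphM, rmorphXn) /=; ring.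
apply: key.
- by rewrite -rmorphB -rmorphXn ler0z sqr_ge0.
- by rewrite -rmorphM ler0z.
- by move=> k _; apply: q_ge0; apply: ltnW.
apply: (@prod_ge1 (cycloBinForm n 1 1)).
- rewrite hom; apply: eq_bigr => k _; by rewrite !rmorph1 !mulr1.
- by move=> k _; apply: q_ge0; apply: ltnW.
move=> k /A1_pos /andP[k0 k2]; rewrite mulf_neq0 // subr_eq0 eq_sym.
  apply: zk_neq1; rewrite k0 /=; exact: ltn_ord.
apply: zk_neq1; rewrite subn_gt0 ltn_ord /=.
by have := ltn_ord k; lia.
Qed.

Lemma bound_p (x y : int) : x * y <= 0 ->
  ((x ^+ 2 + x * y + y ^+ 2)%:~R : algC) ^+ #|A1| <= (cycloBinForm n x y)%:~R.
Proof.
move=> xy0; set X : algC := x%:~R; set Y : algC := y%:~R.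
rewrite hom -/X -/Y.
under eq_bigr => k kA do rewrite (@fac_p _ _ _ _ _ (zinv _ (ltnW (ltn_ord k)))).
have -> : ((x ^+ 2 + x * y + y ^+ 2)%:~R : algC) = (X + Y) ^+ 2 + - (X * Y).
  by rewrite /X /Y !(rmorphD, rmorphB, rmorphM, rmorphXn) /=; ring.
apply: key.
- by rewrite -rmorphD -rmorphXn ler0z sqr_ge0.
- by rewrite -rmorphM -rmorphN ler0z oppr_ge0.
- by move=> k _; apply: p_ge0; apply: ltnW.
apply: (@prod_ge1 (cycloBinForm n 1 (-1))).
- rewrite hom; apply: eq_bigr => k _.
  by rewrite rmorphN !rmorph1 !mulrN1 !opprK.
- by move=> k _; apply: p_ge0; apply: ltnW.
move=> k /A1_pos /andP[k0 k2].
have hk : z ^+ k != -1 by apply: zk_neqN1.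
rewrite mulf_neq0 // addrC addr_eq0 //.
apply/negP => /eqP e; move/negP: hk; apply.
have := zinv _ (ltnW (ltn_ord k)); rewrite e mulrN1 => /eqP.
by rewrite eqr_oppLR.
Qed.

End Alg.

Lemma Q7a (a b : int) : 3 <= a -> 0 <= b -> 7 <= a * a - a * b + b * b.
Proof.
move=> ha hb.
have [e|ne] := eqVneq a 3.
  rewrite e; have [hb1|hb1] := lerP b 1; first nia.
  nia.
have ha4 : 4 <= a by lia.
have h : 0 <= (b + b - a) ^+ 2 := sqr_ge0 _.
have e : (b + b - a) ^+ 2 = 4 * (b * b) - 4 * (a * b) + a * a by ring.
have h16 : 16 <= a * a by nia.
rewrite e in h; lia.
Qed.
Lemma Q7 (x y : int) : 0 <= x * y -> ~~ ((`|x| <= 2) && (`|y| <= 2)) ->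
  7 <= x ^+ 2 - x * y + y ^+ 2.
Proof.
move=> h1 h2.
have : (3 <= x) || (x <= -3) || (3 <= y) || (y <= -3) by move: h2; lia.
rewrite !expr2 => /orP[/orP[/orP[h|h]|h]|h].
- have hy : 0 <= y by nia.
  exact: Q7a.
- have hy : 0 <= - y by nia.
  have := @Q7a (- x) (- y); lia.
- have hy : 0 <= x by nia.
  have := @Q7a (y) (x); lia.
- have hy : 0 <= - x by nia.
  have := @Q7a (- y) (- x); lia.
Qed.

Lemma Q7' (x y : int) : x * y <= 0 -> ~~ ((`|x| <= 2) && (`|y| <= 2)) ->
  7 <= x ^+ 2 + x * y + y ^+ 2.
Proof.
move=> h1 h2.
have e1 : x * - y = - (x * y) by ring.
have e2 : (- y) ^+ 2 = y ^+ 2 by ring.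
have := @Q7 x (- y); rewrite normrN e1 e2 oppr_ge0 => /(_ h1 h2).
by rewrite opprK.
Qed.

Theorem mainTheorem3 (n : nat) (x y : int) :
  (3 <= n)%N ->
  2 <= Num.max `|x| `|y| ->
  cycloBinForm n x y < 7 ^+ (totient n %/ 2) ->
  Num.max `|x| `|y| = 2.
Proof.
move=> n3 hmax hlt.
have [z zp] := C_prim_root_exists (ltnW (ltnW n3)).
have tot := tot_A1 n n3.
rewrite tot mulKn // in hlt.
apply/eqP; rewrite eq_le hmax andbT ge_max.
apply/negPn/negP => H.
have [hxy|hxy] := lerP 0 (x * y).
- have := bound_q n z n3 zp x y hxy; rewrite -rmorphXn ler_int => hb.
  have h7 := Q7 x y hxy H.
  have : 7 ^+ #|A1 n| <= (x ^+ 2 - x * y + y ^+ 2) ^+ #|A1 n|.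
    by apply: lerXn2r; rewrite ?nnegrE ?(le_trans _ h7).
  move=> h; move: (le_trans h hb) (hlt); rewrite leNgt => /negP; apply.
- have := bound_p n z n3 zp x y (ltW hxy); rewrite -rmorphXn ler_int => hb.
  have h7 := Q7' x y (ltW hxy) H.
  have : 7 ^+ #|A1 n| <= (x ^+ 2 + x * y + y ^+ 2) ^+ #|A1 n|.
    by apply: lerXn2r; rewrite ?nnegrE ?(le_trans _ h7).
  move=> h; move: (le_trans h hb) (hlt); rewrite leNgt => /negP; apply.
Qed.
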